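(* Let $\sigma>0$, let $K_G\in\mathbb{R}^{m\times m}$ be a symmetric positive semidefinite matrix, let $W\in\mathbb{R}^{n\times m}$, and let $\mathbf{y}\in\mathbb{R}^n$. For every $\mathbf{x}\in\mathbb{R}^d$ let $\mathbf{w}_{\mathbf{x}}\in\mathbb{R}^m$ be a given vector. Define $\tilde K_X = W K_G W^T$, $\tilde{\mathbf{z}} = (\tilde K_X+\sigma^2 I)^{-1}\mathbf{y}$, $\tilde{\mathbf{k}}_{\mathbf{x}} = W K_G \mathbf{w}_{\mathbf{x}}$ (the SKI quantities), and $\bar{\mathbf{z}} = (K_G W^TW+\sigma^2 I)^{-1}K_G W^T\mathbf{y}$, $\bar C = \sigma^2 (K_GW^TW+\sigma^2 I)^{-1}K_G$ (the GSGP quantities). Then for all $\mathbf{x},\mathbf{x}'\in\mathbb{R}^d$: (i) (mean) $\mathbf{w}_{\mathbf{x}}^T K_G W^T\tilde{\mathbf{z}} = \mathbf{w}_{\mathbf{x}}^T\bar{\mathbf{z}}$; (ii) (covariance) $\mathbf{w}_{\mathbf{x}}^T K_G\mathbf{w}_{\mathbf{x}'} - \tilde{\mathbf{k}}_{\mathbf{x}}^T(\tilde K_X+\sigma^2 I)^{-1}\tilde{\mathbf{k}}_{\mathbf{x}'} = \mathbf{w}_{\mathbf{x}}^T\bar C\,\mathbf{w}_{\mathbf{x}'}$; (iii) (log likelihood) $-\tfrac12\big[\log\det(\tilde K_X+\sigma^2 I)+\mathbf{y}^T\tilde{\mathbf{z}}+n\log(2\pi)\big] = -\tfrac12\big[\log\det(K_GW^TW+\sigma^2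 I)+\tfrac{\mathbf{y}^T(\mathbf{y}-W\bar{\mathbf{z}})}{\sigma^2}+c\big]$, where $c = n\log(2\pi)+(n-m)\log\sigma^2$. In words: the SKI approximate inference expressions for posterior mean, posterior covariance and log likelihood coincide with the exact grid-structured GP (GSGP) inference expressions.
   Context: Setting: Gaussian process regression with data $\mathbf{x}_1,\dots,\mathbf{x}_n\in\mathbb{R}^d$, responses $\mathbf{y}\in\mathbb{R}^n$ and noise variance $\sigma^2$. $G=\{\mathbf{g}_1,\dots,\mathbf{g}_m\}\subseteq\mathbb{R}^d$ is a set of grid points, $k$ a positive-definite kernel, and $K_G=[k(\mathbf{g}_i,\mathbf{g}_j)]_{i,j}$. For $\mathbf{x}\in\mathbb{R}^d$, $\mathbf{w}_{\mathbf{x}}\in\mathbb{R}^m$ is a vector of interpolation weights from the grid to $\mathbf{x}$, and $W\in\mathbb{R}^{n\times m}$ has $i$-th row $\mathbf{w}_{\mathbf{x}_i}^T$. The SKI approximation replaces the kernel matrix by $WK_GW^T$; the grid-structured GP is $\boldsymbol\theta\sim\mathcal N(0,K_G)$, $f(\mathbf{x})=\mathbf{w}_{\mathbf{x}}^T\boldsymbol\theta$, observed with i.i.d. $\mathcal N(0,\sigma^2)$ noise; $\bar{\mathbf z}$ and $\bar C$ are the posterior mean and covariance of $\boldsymbol\theta$. *)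

(* Defs.v *)
From mathcomp Require Import all_boot all_order all_algebra.
From mathcomp Require Import all_classical all_reals all_analysis.
Set Implicit Arguments. Unset Strict Implicit. Unset Printing Implicit Defensive.
Import Order.TTheory GRing.Theory Num.Theory.
Local Open Scope ring_scope.

Definition psd_mx (R : realType) (m : nat) (K : 'M[R]_m) : Prop :=
  K^T = K /\ forall v : 'cV[R]_m, 0 <= (v^T *m K *m v) 0 0.

Definition scal (R : realType) (A : 'M[R]_1) : R := A 0 0.

(* Main.v *)
Require Import Defs.
From mathcomp Require Import all_boot all_order all_algebra.
From mathcomp Require Import all_classical all_reals all_analysis.
Import Order.TTheory GRing.Theory Num.Theory.
Local Open Scope ring_scope.
From mathcomp Require Import polyrcf ring lra.

Lemma char_poly_hornerE (R : comNzRingType) n (A : 'M[R]_n) (x : R) :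
  (char_poly A).[x] = \det (x%:M - A).
Proof.
rewrite /char_poly -[_.[x]]/(horner_eval x _) -det_map_mx; congr (\det _).
apply/matrixP => i j; rewrite !mxE /= /horner_eval hornerD hornerN hornerC hornerMn hornerX.
by [].
Qed.

Lemma rowv_sqr_gt0 (R : realType) n (v : 'rV[R]_n) : v != 0 -> 0 < (v *m v^T) 0 0.
Proof.
move=> vn0; have [j vj] : exists j, v 0 j != 0.
  apply/existsP; move: vn0; apply: contraR; rewrite negb_exists => /forallP H.
  apply/eqP/rowP => j; rewrite mxE; apply/eqP; move: (H j); by rewrite negbK.
rewrite !mxE (bigD1 j) //= ltr_wpDr //.
  by apply: sumr_ge0 => i _; rewrite mxE -expr2 sqr_ge0.
by rewrite mxE -expr2 lt0r sqr_ge0 andbT sqrf_eq0 vj.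
Qed.

Lemma psd_shift_det_neq0 (R : realType) n (N : 'M[R]_n) (x : R) :
  (forall u : 'rV[R]_n, 0 <= (u *m N *m u^T) 0 0) -> 0 < x -> \det (x%:M + N) != 0.
Proof.
move=> HN x0; apply/det0P => -[v vn0 Hv].
have : (v *m (x%:M + N) *m v^T) 0 0 = 0 by rewrite Hv mul0mx mxE.
rewrite mulmxDr mulmxDl mul_mx_scalar -scalemxAl.
set a := (v *m v^T); set b := (_ *m N *m _).
rewrite mxE [(x *: a) 0 0]mxE => H.
have ha := @rowv_sqr_gt0 R n v vn0; have hb := HN v.
have : 0 < x * a 0 0 + b 0 0 by rewrite ltr_wpDr // mulr_gt0.
by rewrite H ltxx.
Qed.

Lemma psd_shift_det_gt0 (R : realType) n (N : 'M[R]_n) (x : R) :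
  (forall u : 'rV[R]_n, 0 <= (u *m N *m u^T) 0 0) -> 0 < x -> 0 < \det (x%:M + N).
Proof.
move=> HN x0.
have E y : \det (y%:M + N) = (char_poly (- N)).[y] by rewrite char_poly_hornerE opprK.
have H : {in `[x, +oo[, forall y, ~~ root (char_poly (- N)) y}.
  move=> y; rewrite in_itv /= andbT => xy; rewrite /root -E.
  by apply: psd_shift_det_neq0 => //; apply: lt_le_trans xy.
have := sgp_pinftyP H; move=> /(_ x); rewrite in_itv /= lexx => /(_ isT).
rewrite /sgp_pinfty (monicP (char_poly_monic _)) sgr1 -E => /eqP.
by rewrite sgr_cp0.
Qed.
Lemma sylvester_det (R : comNzRingType) m n (P : 'M[R]_(m, n)) (Q : 'M[R]_(n, m)) (s : R) :
  s ^+ n * \det (P *m Q + s%:M) = s ^+ m * \det (Q *m P + s%:M).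
Proof.
pose Z := block_mx (s%:M : 'M[R]_m) (- P) Q (1%:M : 'M[R]_n).
have E1 : block_mx 1%:M P 0 1%:M *m Z = block_mx (P *m Q + s%:M) 0 Q 1%:M.
  rewrite mulmx_block !mul1mx !mul0mx !add0r mulmx1 addrC.
  by rewrite addNr.
have E2 : block_mx 1%:M 0 (- Q) s%:M *m Z = block_mx s%:M (- P) 0 (Q *m P + s%:M).
  rewrite mulmx_block !mul1mx !mul0mx !addr0 mulmx1.
  by rewrite mul_mx_scalar mul_scalar_mx scalerN addNr mulNmx mulmxN opprK.
have := congr1 determinant E1; have := congr1 determinant E2.
rewrite !det_mulmx det_ublock det_lblock det_ublock !det1 !det_scalar !mul1r det_lblock det1 mulr1.
by move=> <- <-.
Qed.
Theorem theorem1 (R : realType) (n m d : nat) (sigma : R) (KG : 'M[R]_m)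
  (W : 'M[R]_(n, m)) (y : 'cV[R]_n) (w : 'rV[R]_d -> 'cV[R]_m) :
  0 < sigma -> psd_mx KG ->
  let KX := W *m KG *m W^T in
  let A := KX + sigma ^+ 2 *: 1%:M in
  let zt := invmx A *m y in
  let kt := fun x => W *m KG *m w x in
  let B := KG *m W^T *m W + sigma ^+ 2 *: 1%:M in
  let zb := invmx B *m KG *m W^T *m y in
  let Cb := sigma ^+ 2 *: (invmx B *m KG) in
  forall x x' : 'rV[R]_d,
    scal ((w x)^T *m KG *m W^T *m zt) = scal ((w x)^T *m zb)
    /\ scal ((w x)^T *m KG *m w x') - scal ((kt x)^T *m invmx A *m kt x')
       = scal ((w x)^T *m Cb *m w x')
    /\ - (1 / 2) * (ln (\det A) + scal (y^T *m zt) + n%:R * ln (2 * pi))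
       = - (1 / 2) * (ln (\det B) + scal (y^T *m (y - W *m zb)) / sigma ^+ 2
                      + (n%:R * ln (2 * pi) + (n%:R - m%:R) * ln (sigma ^+ 2))).
Proof.
move=> sgt0 [KGT KGpsd] KX A zt kt B zb Cb x x'.
set s := sigma ^+ 2.
have s0 : 0 < s by rewrite exprn_gt0.
have KXpsd : forall u : 'rV[R]_n, 0 <= (u *m KX *m u^T) 0 0.
  move=> u; have := KGpsd (u *m W)^T.
  by rewrite trmxK trmx_mul !mulmxA.
have AE : A = s%:M + KX by rewrite /A scalemx1 addrC.
have dA : 0 < \det A by rewrite AE; apply: psd_shift_det_gt0.
have syl := sylvester_det _ _ _ (KG *m W^T) W s.
have BE : B = KG *m W^T *m W + s%:M by rewrite /B scalemx1.
have dB : 0 < \det B.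
  have : 0 < s ^+ n * \det B.
    rewrite BE syl mulmxA -/KX addrC -AE.
    by apply: mulr_gt0 => //; apply: exprn_gt0.
  by rewrite pmulr_rgt0 //; apply: exprn_gt0.
have Au : A \in unitmx by rewrite unitmxE unitfE gt_eqF.
have Bu : B \in unitmx by rewrite unitmxE unitfE gt_eqF.
have F2 : B *m (KG *m W^T) = KG *m W^T *m A.
  rewrite BE AE /KX mulmxDl mulmxDr mul_mx_scalar mul_scalar_mx addrC.
  by rewrite !mulmxA.
have F3 : invmx B *m KG *m W^T = KG *m W^T *m invmx A.
  rewrite -mulmxA -[LHS](mulmxK Au) -[invmx B *m _ *m A]mulmxA -F2.
  by rewrite mulKmx.
have zbE : zb = KG *m W^T *m zt by rewrite /zb F3 /zt !mulmxA.
split; first by rewrite zbE !mulmxA.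
have KtE z : (kt z)^T = (w z)^T *m KG *m W^T.
  by rewrite /kt !trmx_mul KGT mulmxA.
have G : invmx B *m KG *m W^T *m W = 1%:M - s *: invmx B.
  move: (mulVmx Bu); rewrite {2}BE mulmxDr mul_mx_scalar !mulmxA => <-.
  by rewrite -addrA subrr addr0.
have H : KG *m W^T *m invmx A *m (W *m KG) = KG - s *: (invmx B *m KG).
  by rewrite -F3 !mulmxA G mulmxBl mul1mx -scalemxAl.
have subE (M N : 'M[R]_1) : (M - N) 0 0 = M 0 0 - N 0 0 by rewrite !mxE.
split.
  have E : (kt x)^T *m invmx A *m kt x'
        = (w x)^T *m (KG *m W^T *m invmx A *m (W *m KG)) *m w x'.
    by rewrite KtE /kt !mulmxA.
  rewrite E H /Cb /scal mulmxBr mulmxBl subE.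
  by rewrite opprB addrC subrK.
have Azt : A *m zt = y by rewrite /zt mulKVmx.
have WzbE : W *m zb = y - s *: zt.
  rewrite zbE !mulmxA -/KX -mulmxA -/zt.
  rewrite -Azt AE mulmxDl mul_scalar_mx.
  by rewrite addrAC subrr add0r.
have yE : y - (y - s *: zt) = s *: zt by rewrite opprB addrCA subrr addr0.
rewrite WzbE yE -scalemxAr /scal [X in X / s]mxE.
have sK : s * (y^T *m zt) 0 0 / s = (y^T *m zt) 0 0.
  by rewrite mulrC mulKf // gt_eqF.
rewrite sK.
have L : ln (s ^+ n) + ln (\det B) = ln (s ^+ m) + ln (\det A).
  rewrite -!lnM ?posrE ?exprn_gt0 //.
  by rewrite BE syl mulmxA -/KX addrC -AE.
rewrite (lnXn n s0) (lnXn m s0) -(mulr_natl (ln s) n) -(mulr_natl (ln s) m) in L.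
set e := (y^T *m zt) 0 0.
move: L; generalize (ln (\det A)) (ln (\det B)) (ln s) e
  (ln (2 * pi : R)) => a b c e' f L.
have -> : a = b + (n%:R - m%:R) * c by rewrite mulrBl; lra.
ring.
Qed.
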